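(* Let $(\Omega,\mathcal A)$ be a Borel space, $(\Omega,X_\bullet)$ a Borel field of metric spaces with Borel structure $\mathcal L(\Omega,X_\bullet)$, and $\mathcal D$ a fundamental family. Then $\mathcal L(\Omega,X_\bullet)=\{y_\bullet\in\mathcal S(\Omega,X_\bullet)\mid \omega\mapsto d_\omega(y_\omega,z_\omega)\text{ is Borel for every }z_\bullet\in\mathcal D\}$ $=\{y_\bullet\in\mathcal S(\Omega,X_\bullet)\mid y_\bullet\text{ is a pointwise limit of a sequence of countable Borel gluings of elements of }\mathcal D\}.$
   Context: Borel field of metric spaces: $(X_\omega,d_\omega)_{\omega\in\Omega}$ metric spaces; a section is $x_\bullet=(x_\omega)$, $x_\omega\in X_\omega$; $\mathcal S(\Omega,X_\bullet)$ the set of sections. A Borel structure is $\mathcal L(\Omega,X_\bullet)\subseteq\mathcal S(\Omega,X_\bullet)$ such that (a) $\omega\mapsto d_\omega(x_\omega,y_\omega)$ is Borel for all $x_\bullet,y_\bullet\in\mathcal L$; (b) if $y_\bullet\in\mathcal S$ and $\omega\mapsto d_\omega(x_\omega,y_\omega)$ is Borel for all $x_\bullet\in\mathcal L$, then $y_\bullet\in\mathcal L$; (c) there is a countable family $\mathcal D=\{x^n_\bullet\}\subseteq\mathcal L$ (a fundamental family) with $\{x^n_\omega\}_n$ dense in $X_\omega$ for every $\omega$. Pointwise limit of sections: $\omega\mapsto\lim_n x^n_\omega$ when all these limits exist. Countable Borel gluing of $(x^n_\bullet)$ along a Borel partition $\Omega=\bigsqcup_n\Omega_n$: the section equal to $x^n_\omega$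 on $\Omega_n$. *)

(* Defs.v *)
From Stdlib Require Import Reals.
Open Scope R_scope.

Record sigma_algebra (Omega : Type) (A : (Omega -> Prop) -> Prop) : Prop := {
  sa_full  : A (fun _ => True);
  sa_compl : forall E, A E -> A (fun w => ~ E w);
  sa_union : forall E : nat -> Omega -> Prop,
      (forall n, A (E n)) -> A (fun w => exists n, E n w) }.

Definition R_open (U : R -> Prop) : Prop :=
  forall x, U x -> exists eps, 0 < eps /\ forall y, Rabs (y - x) < eps -> U y.

Definition borelR (B : R -> Prop) : Prop :=
  forall S : (R -> Prop) -> Prop,
    sigma_algebra R S -> (forall U, R_open U -> S U) -> S B.

Definition borel_fun {Omega : Type} (A : (Omega -> Prop) -> Prop)
  (f : Omega -> R) : Prop :=
  forall B, borelR B -> A (fun w => B (f w)).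

Record is_metric (X : Type) (d : X -> X -> R) : Prop := {
  met_nonneg : forall x y, 0 <= d x y;
  met_zero   : forall x y, d x y = 0 <-> x = y;
  met_sym    : forall x y, d x y = d y x;
  met_tri    : forall x y z, d x z <= d x y + d y z }.

Definition section {Omega : Type} (X : Omega -> Type) := forall w, X w.

Definition fundamental_family {Omega : Type} (X : Omega -> Type)
  (d : forall w, X w -> X w -> R) (L : section X -> Prop)
  (D : nat -> section X) : Prop :=
  (forall n, L (D n)) /\
  (forall w (x : X w) eps, 0 < eps -> exists n, d w (D n w) x < eps).

Record borel_structure {Omega : Type} (A : (Omega -> Prop) -> Prop)
  (X : Omega -> Type) (d : forall w, X w -> X w -> R)
  (L : section X -> Prop) : Prop := {
  bs_a : forall x y, L x -> L y -> borel_fun A (fun w => d w (x w) (y w));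
  bs_b : forall y : section X,
      (forall x, L x -> borel_fun A (fun w => d w (x w) (y w))) -> L y;
  bs_c : exists D, fundamental_family X d L D }.

Definition borel_partition {Omega : Type} (A : (Omega -> Prop) -> Prop)
  (P : nat -> Omega -> Prop) : Prop :=
  (forall n, A (P n)) /\
  (forall n m w, P n w -> P m w -> n = m) /\
  (forall w, exists n, P n w).

Definition is_gluing {Omega : Type} (A : (Omega -> Prop) -> Prop)
  {X : Omega -> Type} (x : nat -> section X) (P : nat -> Omega -> Prop)
  (g : section X) : Prop :=
  borel_partition A P /\ forall n w, P n w -> g w = x n w.

Definition gluing_of_family {Omega : Type} (A : (Omega -> Prop) -> Prop)
  {X : Omega -> Type} (D : nat -> section X) (g : section X) : Prop :=
  exists (k : nat -> nat) (P : nat -> Omega -> Prop),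
    is_gluing A (fun n => D (k n)) P g.

Definition pointwise_limit {Omega : Type} {X : Omega -> Type}
  (d : forall w, X w -> X w -> R) (g : nat -> section X) (y : section X) : Prop :=
  forall w eps, 0 < eps -> exists N, forall m, (N <= m)%nat -> d w (g m w) (y w) < eps.

(* Main.v *)
Require Import Defs.
From Stdlib Require Import ZArith Reals Lra Lia Arith Classical ClassicalEpsilon FunctionalExtensionality PropExtensionality.
Open Scope R_scope.

Lemma A_ext {Omega} (A : (Omega -> Prop) -> Prop) (E F : Omega -> Prop) :
  A E -> (forall w, E w <-> F w) -> A F.
Proof.
  intros H e. replace F with E; auto.
  apply functional_extensionality; intro w; apply propositional_extensionality; auto.
Qed.

Lemma A_ex {Omega} A (HA : sigma_algebra Omega A) (E : nat -> Omega -> Prop) :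
  (forall n, A (E n)) -> A (fun w => exists n, E n w).
Proof. apply sa_union; auto. Qed.

Lemma A_empty {Omega} A (HA : sigma_algebra Omega A) : A (fun _ => False).
Proof.
  apply A_ext with (fun w => ~ True). apply sa_compl; auto. apply sa_full; auto.
  tauto.
Qed.

Lemma A_and {Omega} A (HA : sigma_algebra Omega A) (E1 E2 : Omega -> Prop) :
  A E1 -> A E2 -> A (fun w => E1 w /\ E2 w).
Proof.
  intros H1 H2.
  apply A_ext with (fun w => ~ exists n, (match n with O => fun w => ~ E1 w | _ => fun w => ~ E2 w end) w).
  - apply sa_compl; auto. apply A_ex; auto. intros [|n]; apply sa_compl; auto.
  - intro w; split.
    + intros H. split; apply NNPP; intro C; apply H; [exists O | exists 1%nat]; auto.
    + intros [a b] [[|n] C]; auto.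
Qed.

Lemma A_forall {Omega} A (HA : sigma_algebra Omega A) (E : nat -> Omega -> Prop) :
  (forall n, A (E n)) -> A (fun w => forall n, E n w).
Proof.
  intros H. apply A_ext with (fun w => ~ exists n, ~ E n w).
  - apply sa_compl; auto. apply A_ex; auto. intro n; apply sa_compl; auto.
  - intro w; split.
    + intros C n. apply NNPP; intro C'; apply C; eauto.
    + intros C [n C']; auto.
Qed.

Lemma A_const_and {Omega} A (HA : sigma_algebra Omega A) (Pc : Prop) (E : Omega -> Prop) :
  A E -> A (fun w => Pc /\ E w).
Proof.
  intros H. destruct (classic Pc) as [p|np].
  - apply A_ext with E; auto. tauto.
  - apply A_ext with (fun _ => False). apply A_empty; auto. tauto.
Qed.

Lemma A_const_imp {Omega} A (HA : sigma_algebra Omega A) (Pc : Prop) (E : Omega -> Prop) :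
  A E -> A (fun w => Pc -> E w).
Proof.
  intros H. destruct (classic Pc) as [p|np].
  - apply A_ext with E; auto. tauto.
  - apply A_ext with (fun _ => True). apply sa_full; auto. tauto.
Qed.

Definition qn (i j k : nat) : R := (INR i - INR j) / INR (S k).

Lemma small_inv (eps : R) : 0 < eps -> exists m, / INR (S m) < eps.
Proof.
  intros H. destruct (archimed_cor1 eps H) as [N [HN HN0]].
  exists (N - 1)%nat. replace (S (N - 1)) with N by lia. auto.
Qed.

Lemma inv_pos (m : nat) : 0 < / INR (S m).
Proof. apply Rinv_0_lt_compat, lt_0_INR; lia. Qed.

Lemma IZR_nat (z : Z) : exists i j, IZR z = INR i - INR j.
Proof.
  destruct (Z.le_ge_cases 0 z) as [h|h].
  - exists (Z.to_nat z), O. rewrite (INR_IZR_INZ (Z.to_nat z)), Z2Nat.id by lia. simpl; lra.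
  - exists O, (Z.to_nat (- z)). rewrite (INR_IZR_INZ (Z.to_nat (- z))), Z2Nat.id by lia.
    rewrite opp_IZR. simpl; lra.
Qed.

Lemma dense_q (a b : R) : a < b -> exists i j k, a < qn i j k < b.
Proof.
  intros Hab. destruct (small_inv (b - a)) as [k Hk]; [lra|].
  set (N := INR (S k)) in *.
  assert (HN : 0 < N) by (apply lt_0_INR; lia).
  destruct (archimed (a * N)) as [h1 h2].
  destruct (IZR_nat (up (a * N))) as [i [j Hij]].
  exists i, j, k. unfold qn. fold N. rewrite <- Hij.
  assert (HNi : / N * N = 1) by (field; lra).
  split.
  - apply Rmult_lt_reg_r with N; auto. unfold Rdiv. rewrite Rmult_assoc, HNi. lra.
  - apply Rmult_lt_reg_r with N; auto. unfold Rdiv. rewrite Rmult_assoc, HNi.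
    assert (/ N * N < (b - a) * N) by (apply Rmult_lt_compat_r; auto). lra.
Qed.

Lemma borel_lt {Omega} A (f : Omega -> R) a :
  borel_fun A f -> A (fun w => f w < a).
Proof.
  intros H. apply (H (fun x => x < a)). intros S HS HU. apply HU.
  intros x Hx. exists (a - x). split; [lra|]. intros y Hy.
  apply Rabs_def2 in Hy. lra.
Qed.

Lemma borel_of_lt {Omega} A (HA : sigma_algebra Omega A) (f : Omega -> R) :
  (forall a, A (fun w => f w < a)) -> borel_fun A f.
Proof.
  intros H B HB. apply (HB (fun B => A (fun w => B (f w)))).
  - constructor.
    + apply sa_full; auto.
    + intros E HE. apply sa_compl; auto.
    + intros E HE. apply (sa_union _ _ HA (fun n w => E n (f w))); auto.
  - intros U HU.
    assert (Hle : forall a, A (fun w => f w <= a)).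
    { intro a. apply A_ext with (fun w => forall n, f w < a + / INR (S n)).
      - apply A_forall; auto.
      - intro w; split.
        + intros h. destruct (Rle_or_lt (f w) a) as [|h2]; auto.
          destruct (small_inv (f w - a)) as [n Hn]; [lra|]. specialize (h n). lra.
        + intros h n. pose proof (inv_pos n). lra. }
    assert (Hgt : forall a, A (fun w => a < f w)).
    { intro a. apply A_ext with (fun w => ~ f w <= a).
      - apply sa_compl; auto.
      - intro w; split; intros; lra. }
    apply A_ext with (fun w => exists i1 j1 k1 i2 j2 k2,
       (forall x, qn i1 j1 k1 < x < qn i2 j2 k2 -> U x) /\
       (qn i1 j1 k1 < f w /\ f w < qn i2 j2 k2)).
    + do 6 (apply A_ex; auto; intro).
      apply A_const_and; auto. apply A_and; auto.
    + intro w; split.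
      * intros [i1 [j1 [k1 [i2 [j2 [k2 [h1 h2]]]]]]]. apply h1; auto.
      * intros h. destruct (HU _ h) as [eps [He Hb]].
        destruct (dense_q (f w - eps) (f w)) as [i1 [j1 [k1 Hq1]]]; [lra|].
        destruct (dense_q (f w) (f w + eps)) as [i2 [j2 [k2 Hq2]]]; [lra|].
        exists i1, j1, k1, i2, j2, k2. split; [|lra].
        intros x Hx. apply Hb. apply Rabs_def1; lra.
Qed.

Lemma borel_lim {Omega} A (HA : sigma_algebra Omega A) (f : nat -> Omega -> R) (F : Omega -> R) :
  (forall m, borel_fun A (f m)) ->
  (forall w eps, 0 < eps -> exists N, forall m, (N <= m)%nat -> Rabs (f m w - F w) < eps) ->
  borel_fun A F.
Proof.
  intros Hf Hc. apply borel_of_lt; auto. intro a.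
  apply A_ext with (fun w => exists j N, forall m, (N <= m)%nat -> f m w < a - / INR (S j)).
  - do 2 (apply A_ex; auto; intro). apply A_forall; auto; intro.
    apply A_const_imp; auto. apply borel_lt; auto.
  - intro w; split.
    + intros [j [N h]]. destruct (Hc w (/ INR (S j)) (inv_pos j)) as [N' h'].
      specialize (h (max N N') ltac:(lia)). specialize (h' (max N N') ltac:(lia)).
      apply Rabs_def2 in h'. lra.
    + intros h. destruct (small_inv ((a - F w) / 2)) as [j Hj]; [lra|].
      destruct (Hc w ((a - F w) / 2)) as [N hN]; [lra|].
      exists j, N. intros m Hm. specialize (hN m Hm). apply Rabs_def2 in hN. lra.
Qed.

Lemma borel_glue {Omega} A (HA : sigma_algebra Omega A) (P : nat -> Omega -> Prop)
  (h : nat -> Omega -> R) (F : Omega -> R) :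
  borel_partition A P -> (forall n, borel_fun A (h n)) ->
  (forall n w, P n w -> F w = h n w) -> borel_fun A F.
Proof.
  intros [HP [Hd Hc]] Hh Heq. apply borel_of_lt; auto. intro a.
  apply A_ext with (fun w => exists n, P n w /\ h n w < a).
  - apply A_ex; auto; intro n. apply A_and; auto. apply borel_lt; auto.
  - intro w; split.
    + intros [n [p l]]. rewrite (Heq n w p). auto.
    + intros l. destruct (Hc w) as [n p]. exists n. rewrite <- (Heq n w p). auto.
Qed.

Lemma least_ex (Q : nat -> Prop) n : Q n -> exists m, Q m /\ forall j, (j < m)%nat -> ~ Q j.
Proof.
  induction n as [n IH] using (well_founded_induction lt_wf). intros Qn.
  destruct (classic (exists j, (j < n)%nat /\ Q j)) as [[j [Hj Qj]]|Hno].
  - exact (IH j Hj Qj).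
  - exists n; split; auto. intros j Hj Qj; apply Hno; eauto.
Qed.

Theorem mainTheorem3 (Omega : Type) (A : (Omega -> Prop) -> Prop)
  (X : Omega -> Type) (d : forall w, X w -> X w -> R)
  (L : section X -> Prop) (D : nat -> section X)
  (HA : sigma_algebra Omega A)
  (Hmet : forall w, is_metric (X w) (d w))
  (HL : borel_structure A X d L)
  (HD : fundamental_family X d L D) :
  (forall y : section X,
     L y <-> (forall n, borel_fun A (fun w => d w (y w) (D n w)))) /\
  (forall y : section X,
     L y <-> exists g : nat -> section X,
               (forall m, gluing_of_family A D (g m)) /\ pointwise_limit d g y).
Proof.
  destruct HD as [HDL HDd].
  assert (tri : forall w x y z, d w x z <= d w x y + d w y z) by (intros w; apply met_tri, Hmet).
  assert (sym : forall w x y, d w x y = d w y x) by (intros w; apply met_sym, Hmet).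
  assert (P1 : forall y : section X,
     L y <-> (forall n, borel_fun A (fun w => d w (y w) (D n w)))).
  { intro y; split.
    - intros Ly n. exact (bs_a _ _ _ _ HL y (D n) Ly (HDL n)).
    - intros H. apply (bs_b _ _ _ _ HL). intros x Lx. apply borel_of_lt; auto. intro a.
      apply A_ext with (fun w => exists n i j k,
          d w (x w) (D n w) < qn i j k /\ d w (y w) (D n w) < a - qn i j k).
      + do 4 (apply A_ex; auto; intro). apply A_and; auto; apply borel_lt; auto.
        exact (bs_a _ _ _ _ HL x (D _) Lx (HDL _)).
      + intro w; split.
        * intros [n [i [j [k [h1 h2]]]]].
          pose proof (tri w (x w) (D n w) (y w)). rewrite (sym w (D n w) (y w)) in H0. lra.
        * intros h. set (del := a - d w (x w) (y w)).
          destruct (HDd w (y w) (del / 3)) as [n hn]; [unfold del; lra|].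
          pose proof (tri w (x w) (y w) (D n w)). rewrite (sym w (y w) (D n w)) in H0.
          destruct (dense_q (d w (x w) (y w) + del / 3) (d w (x w) (y w) + 2 * del / 3))
            as [i [j [k hq]]]; [unfold del; lra|].
          exists n, i, j, k. rewrite (sym w (y w) (D n w)). unfold del in *. split; lra. }
  split; [exact P1|].
  intro y; split.
  - intros Ly.
    assert (Hdy : forall n, borel_fun A (fun w => d w (D n w) (y w)))
      by (intro n; exact (bs_a _ _ _ _ HL (D n) y (HDL n) Ly)).
    set (P := fun m n w => d w (D n w) (y w) < / INR (S m) /\
                 forall j, (j < n)%nat -> ~ d w (D j w) (y w) < / INR (S m)).
    assert (cover : forall m w, exists n, P m n w).
    { intros m w. destruct (HDd w (y w) (/ INR (S m)) (inv_pos m)) as [n0 h0].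
      exact (least_ex (fun n => d w (D n w) (y w) < / INR (S m)) n0 h0). }
    assert (disj : forall m n n' w, P m n w -> P m n' w -> n = n').
    { intros m n n' w [a1 b1] [a2 b2].
      destruct (lt_eq_lt_dec n n') as [[lt|eq]|lt]; auto.
      - exfalso; exact (b2 n lt a1).
      - exfalso; exact (b1 n' lt a2). }
    set (g := fun m w => D (proj1_sig (constructive_indefinite_description _ (cover m w))) w).
    exists g. split.
    + intro m. exists (fun n => n), (P m). split; [split; [|split]|].
      * intro n. apply A_and; auto. apply borel_lt; auto.
        apply A_forall; auto; intro j. apply A_const_imp; auto. apply sa_compl; auto.
        apply borel_lt; auto.
      * intros n n' w; apply disj.
      * apply cover.
      * intros n w p. unfold g. destruct (constructive_indefinite_description _ (cover m w)) as [n' p'].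
        simpl. rewrite (disj m n' n w p' p). reflexivity.
    + intros w eps Heps. destruct (small_inv eps Heps) as [N HN]. exists N.
      intros m Hm. unfold g. destruct (constructive_indefinite_description _ (cover m w)) as [n' p']. simpl. destruct p' as [p' _].
      simpl. assert (/ INR (S m) <= / INR (S N)).
      { apply Rinv_le_contravar. apply lt_0_INR; lia. apply le_INR; lia. }
      lra.
  - intros [g [Hg Hlim]].
    assert (Lg : forall m, L (g m)).
    { intro m. apply (bs_b _ _ _ _ HL). intros x Lx.
      destruct (Hg m) as [k [P [Hpart Heq]]].
      apply (borel_glue A HA P (fun n w => d w (x w) (D (k n) w))); auto.
      - intro n. exact (bs_a _ _ _ _ HL x (D (k n)) Lx (HDL _)).
      - intros n w p. simpl. rewrite (Heq n w p). reflexivity. }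
    apply (bs_b _ _ _ _ HL). intros x Lx.
    apply (borel_lim A HA (fun m w => d w (x w) (g m w))).
    + intro m. exact (bs_a _ _ _ _ HL x (g m) Lx (Lg m)).
    + intros w eps Heps. destruct (Hlim w eps Heps) as [N HN]. exists N.
      intros m Hm. specialize (HN m Hm).
      pose proof (tri w (x w) (y w) (g m w)). pose proof (tri w (x w) (g m w) (y w)).
      rewrite (sym w (y w) (g m w)) in H. apply Rabs_def1; lra.
Qed.
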